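(* Let $a,b,c>0$ and let $F(x)=F(a,b;c;x)$ for $|x|<1$. If $a+b\ge c\ge 2ab$ and $c>a+b-1/2$, then $1/F(x)$ is concave on $(0,1)$. In particular, $$F\Big(\frac{x+y}{2}\Big)\le\frac{2F(x)F(y)}{F(x)+F(y)}$$ for all $x,y\in(0,1)$, with equality if and only if $x=y$.
   Context: $F(a,b;c;x)={}_2F_1(a,b;c;x)=\sum_{n=0}^\infty\frac{(a,n)(b,n)}{(c,n)\,n!}x^n$ for $|x|<1$ is the Gaussian hypergeometric function, where $(a,0)=1$ and $(a,n)=a(a+1)\cdots(a+n-1)$ for $n\ge1$. *)

(* Defs.v *)
From Stdlib Require Import Reals Arith.
From Coquelicot Require Import Coquelicot.
Open Scope R_scope.

Fixpoint poch (a : R) (n : nat) : R :=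
  match n with
  | O => 1
  | S k => poch a k * (a + INR k)
  end.

Definition hyp_coef (a b c : R) (n : nat) : R :=
  poch a n * poch b n / (poch c n * INR (fact n)).

(* F(a,b;c;x) = sum_{n>=0} (a,n)(b,n)/((c,n) n!) x^n  (meaningful for |x|<1,
   where the series converges). *)
Definition hypF (a b c x : R) : R :=
  Series (fun n => hyp_coef a b c n * x ^ n).

Definition concave_on (l u : R) (g : R -> R) : Prop :=
  forall x y t, l < x < u -> l < y < u -> 0 <= t <= 1 ->
    t * g x + (1 - t) * g y <= g (t * x + (1 - t) * y).

(* Main.v *)
Require Import Defs.
From Stdlib Require Import Reals Lra Lia Psatz.
From Coquelicot Require Import Coquelicot.
Open Scope R_scope.


Lemma poch_pos (a : R) (n : nat) : 0 < a -> 0 < poch a n.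
Proof. intros Ha; induction n; simpl. lra. apply Rmult_lt_0_compat; auto. pose proof (pos_INR n); lra. Qed.

Lemma A_pos (a b c : R) n : 0 < a -> 0 < b -> 0 < c -> 0 < hyp_coef a b c n.
Proof.
  intros; unfold hyp_coef. apply Rdiv_lt_0_compat.
  apply Rmult_lt_0_compat; apply poch_pos; auto.
  apply Rmult_lt_0_compat. apply poch_pos; auto. apply INR_fact_lt_0.
Qed.

Lemma A_0 a b c : hyp_coef a b c 0 = 1.
Proof. unfold hyp_coef; simpl; field. Qed.

Definition rr (a b c : R) (n : nat) : R :=
  (a + INR n) * (b + INR n) / ((c + INR n) * (INR n + 1)).

Lemma A_S a b c n : 0 < c -> hyp_coef a b c (S n) = hyp_coef a b c n * rr a b c n.
Proof.
  intros Hc. unfold hyp_coef, rr. cbn [poch]. rewrite fact_simpl, mult_INR, S_INR.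
  pose proof (pos_INR n). pose proof (poch_pos c n Hc). pose proof (INR_fact_neq_0 n).
  field. repeat split; lra.
Qed.

Lemma div_le_cross X Y Z W : 0 < Y -> 0 < W -> X * W <= Z * Y -> X / Y <= Z / W.
Proof.
  intros HY HW H.
  replace (X / Y) with ((X * W) * / (Y * W)) by (field; lra).
  replace (Z / W) with ((Z * Y) * / (Y * W)) by (field; lra).
  apply Rmult_le_compat_r; auto. left; apply Rinv_0_lt_compat, Rmult_lt_0_compat; auto.
Qed.

Lemma rr_step a b c n : 0 < a -> 0 < b -> 0 < c ->
  a + b >= c -> c >= 2 * a * b -> c > a + b - 1 / 2 -> rr a b c n <= rr a b c (S n).
Proof.
  intros Ha Hb Hc H1 H2 H3. unfold rr. rewrite S_INR. set (N := INR n).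
  assert (HN : 0 <= N) by apply pos_INR.
  apply div_le_cross. nra. nra.
  set (s := a + b). set (p := a * b).
  assert (Hp : 0 < p) by (apply Rmult_lt_0_compat; auto).
  assert (E : (a + (N + 1)) * (b + (N + 1)) * ((c + N) * (N + 1)) -
              (a + N) * (b + N) * ((c + (N + 1)) * (N + 1 + 1)) =
              (c + 1 - s) * (N * N) + (3 * c + 1 - s - 2 * p) * N + (c * (1 + s - p) - 2 * p))
    by (unfold s, p; ring).
  assert (K2 : 0 <= (c + 1 - s) * (N * N)) by (apply Rmult_le_pos; [unfold s; lra | nra]).
  assert (K1 : 0 <= (3 * c + 1 - s - 2 * p) * N) by (apply Rmult_le_pos; [unfold s, p in *; lra | lra]).
  assert (K0a : 0 <= (c - 2 * p) * (1 + s - p)) by (apply Rmult_le_pos; unfold s, p in *; lra).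
  assert (K0b : 0 < p * (s - p)) by (apply Rmult_lt_0_compat; unfold s, p in *; lra).
  assert (K0 : 0 <= c * (1 + s - p) - 2 * p) by nra.
  lra.
Qed.

Definition hyps (a b c : R) := 0 < a /\ 0 < b /\ 0 < c /\ a + b >= c /\ c >= 2 * a * b /\ c > a + b - 1 / 2.

Lemma rr_mono a b c m n : hyps a b c -> (m <= n)%nat -> rr a b c m <= rr a b c n.
Proof.
  intros [Ha [Hb [Hc [H1 [H2 H3]]]]] Hmn. induction Hmn. lra.
  eapply Rle_trans; [exact IHHmn | apply rr_step; auto].
Qed.

Lemma rr_bounds a b c n : hyps a b c -> 0 <= rr a b c n <= 1.
Proof.
  intros [Ha [Hb [Hc [H1 [H2 H3]]]]]. unfold rr. pose proof (pos_INR n) as HN.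
  split. left; apply Rdiv_lt_0_compat; nra.
  replace 1 with (((c + INR n) * (INR n + 1)) / ((c + INR n) * (INR n + 1))) at 2 by (field; lra).
  apply div_le_cross; [nra|nra|]. apply Rmult_le_compat_r; [nra|].
  assert (0 <= (c + 1 - (a + b)) * INR n) by (apply Rmult_le_pos; lra). nra.
Qed.

Lemma A_le1 a b c n : hyps a b c -> hyp_coef a b c n <= 1.
Proof.
  intros H. pose proof H as [Ha [Hb [Hc _]]]. induction n.
  rewrite A_0; lra.
  rewrite A_S by auto. pose proof (rr_bounds a b c n H). pose proof (A_pos a b c n Ha Hb Hc). nra.
Qed.

Fixpoint Bf (a b c : R) (n : nat) : nat -> R :=
  match n with
  | O => fun _ => 1
  | S m => fun k => if Nat.leb k m then Bf a b c m k
                   else - sum_f_R0 (fun j => Bf a b c m j * hyp_coef a b c (S m - j)) m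
  end.
Definition Bc a b c n := Bf a b c n n.

Lemma Bf_S a b c m k : Bf a b c (S m) k = if Nat.leb k m then Bf a b c m k
                   else - sum_f_R0 (fun j => Bf a b c m j * hyp_coef a b c (S m - j)) m.
Proof. reflexivity. Qed.

Lemma Bf_eq a b c n k : (k <= n)%nat -> Bf a b c n k = Bc a b c k.
Proof.
  revert k; induction n; intros k Hk.
  - assert (k = 0%nat) by lia; subst; reflexivity.
  - rewrite Bf_S. destruct (Nat.leb k n) eqn:E.
    + apply IHn. apply Nat.leb_le; auto.
    + apply Nat.leb_gt in E. assert (k = S n) by lia. subst k.
      unfold Bc. rewrite Bf_S. assert (Nat.leb (S n) n = false) as -> by (apply Nat.leb_gt; lia).
      reflexivity.
Qed.

Lemma B_0 a b c : Bc a b c 0 = 1.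
Proof. reflexivity. Qed.

Lemma B_S a b c m : Bc a b c (S m) = - sum_f_R0 (fun j => Bc a b c j * hyp_coef a b c (S m - j)) m.
Proof.
  unfold Bc at 1. rewrite Bf_S. assert (Nat.leb (S m) m = false) as -> by (apply Nat.leb_gt; lia).
  f_equal. apply sum_eq. intros i Hi. rewrite Bf_eq; auto.
Qed.

Lemma conv_id a b c n : (1 <= n)%nat ->
  sum_f_R0 (fun k => Bc a b c k * hyp_coef a b c (n - k)) n = 0.
Proof.
  intros Hn. destruct n as [|m]. lia.
  change (sum_f_R0 (fun k => Bc a b c k * hyp_coef a b c (S m - k)) m + Bc a b c (S m) * hyp_coef a b c (S m - S m) = 0).
  rewrite Nat.sub_diag, A_0, B_S. lra.
Qed.

Lemma sum_nonneg f N : (forall i, (i <= N)%nat -> 0 <= f i) -> 0 <= sum_f_R0 f N.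
Proof.
  induction N; intros H; simpl. apply H; lia.
  apply Rplus_le_le_0_compat. apply IHN; intros; apply H; lia. apply H; lia.
Qed.

Lemma sum_le_first f N : (forall i, (1 <= i <= N)%nat -> f i <= 0) -> sum_f_R0 f N <= f 0%nat.
Proof.
  induction N; intros H; simpl. lra.
  assert (f (S N) <= 0) by (apply H; lia).
  assert (sum_f_R0 f N <= f 0%nat) by (apply IHN; intros; apply H; lia). lra.
Qed.

Lemma B_nonpos a b c n : hyps a b c -> forall k, (1 <= k <= n)%nat -> Bc a b c k <= 0.
Proof.
  intros H. pose proof H as [Ha [Hb [Hc _]]]. induction n; intros k Hk. lia.
  destruct (Nat.eq_dec k (S n)) as [->|Hne]; [| apply IHn; lia].
  rewrite B_S.
  destruct n as [|n'].
  - simpl. rewrite B_0. pose proof (A_pos a b c 1 Ha Hb Hc). lra.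
  - set (n := S n') in *.
    assert (E : sum_f_R0 (fun j => Bc a b c j * hyp_coef a b c (S n - j)) n =
      sum_f_R0 (fun j => Bc a b c j * hyp_coef a b c (n - j) * (rr a b c (n - j) - rr a b c n)) n
      + rr a b c n * sum_f_R0 (fun j => Bc a b c j * hyp_coef a b c (n - j)) n).
    { rewrite scal_sum, <- plus_sum. apply sum_eq. intros i Hi.
      replace (S n - i)%nat with (S (n - i)) by lia. rewrite A_S by auto. ring. }
    rewrite E, conv_id by lia. rewrite Rmult_0_r, Rplus_0_r.
    cut (0 <= sum_f_R0 (fun j => Bc a b c j * hyp_coef a b c (n - j) * (rr a b c (n - j) - rr a b c n)) n). lra.
    apply sum_nonneg. intros i Hi. destruct i as [|i].
    + rewrite Nat.sub_0_r. lra.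
    + assert (Bc a b c (S i) <= 0) by (apply IHn; lia).
      assert (rr a b c (n - S i) <= rr a b c n) by (apply rr_mono; auto; lia).
      pose proof (A_pos a b c (n - S i) Ha Hb Hc).
      replace (Bc a b c (S i) * hyp_coef a b c (n - S i) * (rr a b c (n - S i) - rr a b c n))
        with ((- Bc a b c (S i)) * hyp_coef a b c (n - S i) * (rr a b c n - rr a b c (n - S i))) by ring.
      apply Rmult_le_pos; [apply Rmult_le_pos|]; lra.
Qed.

Lemma B_bound a b c n : hyps a b c -> Rabs (Bc a b c n) <= 1.
Proof.
  intros H. pose proof H as [Ha [Hb [Hc _]]]. destruct n as [|m].
  rewrite B_0, Rabs_R1; lra.
  assert (Hn : Bc a b c (S m) <= 0) by (apply (B_nonpos a b c (S m)); auto; lia).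
  rewrite Rabs_left1 by auto.
  assert (- Bc a b c (S m) <= hyp_coef a b c (S m)).
  { rewrite B_S, Ropp_involutive.
    eapply Rle_trans. apply sum_le_first.
    - intros i Hi. assert (Bc a b c i <= 0) by (apply (B_nonpos a b c m); auto).
      pose proof (A_pos a b c (S m - i) Ha Hb Hc). nra.
    - rewrite B_0, Nat.sub_0_r. lra. }
  pose proof (A_le1 a b c (S m) H). lra.
Qed.

Lemma radius_ge (u : nat -> R) x : (forall n, Rabs (u n) <= 1) -> Rabs x < 1 ->
  Rbar_lt (Rabs x) (CV_radius u).
Proof.
  intros Hu Hx.
  assert (Hle : Rbar_le 1 (CV_radius u)).
  { destruct (CV_radius_bounded u) as [Hub _]. apply Hub. exists 1. intros n.
    rewrite pow1, Rmult_1_r. auto. }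
  destruct (CV_radius u); simpl in *; auto; lra.
Qed.

Lemma ex_ser (u : nat -> R) x : (forall n, Rabs (u n) <= 1) -> Rabs x < 1 ->
  ex_series (fun n => u n * x ^ n).
Proof. intros; apply ex_series_Rabs, CV_disk_inside, radius_ge; auto. Qed.

Lemma Series_zero : Series (fun _ => 0) = 0.
Proof.
  transitivity (Series (fun n : nat => 0 * (fun _ : nat => 0) n)).
  apply Series_ext; intros; ring. rewrite (Series_scal_l 0 (fun _ => 0)); ring.
Qed.

Lemma Series_nonneg d : (forall n, 0 <= d n) -> ex_series d -> 0 <= Series d.
Proof.
  intros H1 H2. rewrite <- Series_zero. apply Series_le; auto. intros; split; auto; lra.
Qed.

Lemma Series_ge_2 d : (forall n, 0 <= d n) -> ex_series d -> d 2%nat <= Series d.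
Proof.
  intros H1 H2. rewrite (Series_incr_n d 3) by (auto; lia).
  simpl. pose proof (H1 0%nat). pose proof (H1 1%nat).
  assert (0 <= Series (fun k => d (S (S (S k))))).
  { apply Series_nonneg. auto. apply (ex_series_incr_n d 3); auto. }
  lra.
Qed.

Lemma A_abs a b c n : hyps a b c -> Rabs (hyp_coef a b c n) <= 1.
Proof.
  intros H. pose proof H as [Ha [Hb [Hc _]]]. rewrite Rabs_pos_eq.
  apply A_le1; auto. left; apply A_pos; auto.
Qed.

Lemma GF a b c x : hyps a b c -> Rabs x < 1 -> PSeries (Bc a b c) x * hypF a b c x = 1.
Proof.
  intros H Hx.
  change (hypF a b c x) with (PSeries (hyp_coef a b c) x).
  rewrite <- PSeries_mult by (apply radius_ge; auto; intros; first [apply B_bound | apply A_abs]; auto).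
  unfold PSeries. rewrite Series_incr_1.
  - rewrite (Series_ext _ (fun _ => 0)). rewrite Series_zero.
    unfold PS_mult; simpl; rewrite B_0, A_0; ring.
    intros n. unfold PS_mult. rewrite conv_id by lia. ring.
  - apply ex_series_Rabs. apply CV_disk_inside. apply radius_ge; auto.
    intros n. destruct n as [|n]. unfold PS_mult; simpl; rewrite B_0, A_0, Rmult_1_r, Rabs_R1; lra.
    unfold PS_mult. rewrite conv_id by lia. rewrite Rabs_R0; lra.
Qed.

Lemma pow_convex x y t n : 0 <= x -> 0 <= y -> 0 <= t <= 1 ->
  (t * x + (1 - t) * y) ^ n <= t * x ^ n + (1 - t) * y ^ n.
Proof.
  intros Hx Hy Ht. induction n. simpl; lra.
  assert (K : 0 <= (x - y) * (x ^ n - y ^ n)).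
  { destruct (Rle_dec x y).
    - assert (x ^ n <= y ^ n) by (apply pow_incr; lra). nra.
    - assert (y ^ n <= x ^ n) by (apply pow_incr; lra). nra. }
  assert (Hm : 0 <= t * x + (1 - t) * y) by nra.
  simpl. eapply Rle_trans. apply Rmult_le_compat_l. exact Hm. exact IHn.
  assert (0 <= t * (1 - t)) by nra.
  assert (0 <= t * (1 - t) * ((x - y) * (x ^ n - y ^ n))) by (apply Rmult_le_pos; auto).
  nra.
Qed.

Lemma rr01 a b c : hyps a b c -> rr a b c 0 < rr a b c 1.
Proof.
  intros [Ha [Hb [Hc [H1 [H2 H3]]]]]. unfold rr. simpl INR.
  set (p := a * b). set (s := a + b).
  assert (Hp : 0 < p) by (apply Rmult_lt_0_compat; auto).
  assert (K0a : 0 <= (c - 2 * p) * (1 + s - p)) by (apply Rmult_le_pos; unfold s, p in *; lra).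
  assert (K0b : 0 < p * (s - p)) by (apply Rmult_lt_0_compat; unfold s, p in *; lra).
  assert (K0 : 0 < c * (1 + s - p) - 2 * p) by nra.
  assert (E : (a + 1) * (b + 1) / ((c + 1) * (1 + 1)) - (a + 0) * (b + 0) / ((c + 0) * (0 + 1))
     = (c * (1 + s - p) - 2 * p) / (2 * c * (c + 1))) by (unfold s, p; field; lra).
  assert (0 < (c * (1 + s - p) - 2 * p) / (2 * c * (c + 1))) by (apply Rdiv_lt_0_compat; nra).
  lra.
Qed.

Lemma B2_neg a b c : hyps a b c -> Bc a b c 2 < 0.
Proof.
  intros H. pose proof H as [Ha [Hb [Hc _]]].
  rewrite B_S. simpl sum_f_R0. rewrite B_S. simpl sum_f_R0. rewrite B_0.
  simpl Nat.sub. rewrite !A_S by auto. rewrite A_0.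
  pose proof (rr01 a b c H). pose proof (rr_bounds a b c 0 H).
  assert (0 < rr a b c 0).
  { unfold rr; simpl INR. apply Rdiv_lt_0_compat; nra. }
  nra.
Qed.

Lemma mid_in x y t : 0 < x < 1 -> 0 < y < 1 -> 0 <= t <= 1 -> 0 < t * x + (1 - t) * y < 1.
Proof.
  intros Hx Hy [Ht0 Ht1]. split.
  - destruct Ht0 as [Ht0|Ht0]; [|subst t; lra]. assert (0 < t * x) by nra. assert (0 <= (1 - t) * y) by nra. lra.
  - destruct Ht1 as [Ht1|Ht1]; [|subst t; lra]. assert (t * x <= t) by nra. assert ((1 - t) * y < 1 - t) by nra. lra.
Qed.

Lemma ex_scal (k : R) (u : nat -> R) : ex_series u -> ex_series (fun n => k * u n).
Proof. intros Hu. eapply ex_series_ext; [|apply (ex_series_scal_l k); exact Hu]. intros; reflexivity. Qed.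

Lemma ex_minus (u v : nat -> R) : ex_series u -> ex_series v -> ex_series (fun n => u n - v n).
Proof. intros Hu Hv. eapply ex_series_ext; [|apply (ex_series_minus u v); auto]. intros; reflexivity. Qed.

Definition Gf a b c x := PSeries (Bc a b c) x.

Lemma F_pos a b c x : hyps a b c -> 0 < x < 1 -> 0 < hypF a b c x.
Proof.
  intros H Hx. pose proof H as [Ha [Hb [Hc _]]].
  assert (0 <= hypF a b c x).
  { apply Series_nonneg. intros n. apply Rmult_le_pos. left; apply A_pos; auto.
    apply pow_le; lra. apply ex_ser. intros; apply A_abs; auto. rewrite Rabs_pos_eq; lra. }
  assert (HG := GF a b c x H ltac:(rewrite Rabs_pos_eq; lra)).
  destruct H0 as [|E]; auto. rewrite <- E, Rmult_0_r in HG. lra.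
Qed.

Lemma invF a b c x : hyps a b c -> 0 < x < 1 -> / hypF a b c x = Gf a b c x.
Proof.
  intros H Hx. pose proof (F_pos a b c x H Hx).
  assert (HG := GF a b c x H ltac:(rewrite Rabs_pos_eq; lra)).
  unfold Gf. rewrite <- (Rmult_1_l (/ hypF a b c x)). rewrite <- HG. field. lra.
Qed.

Lemma G_gap a b c x y t : hyps a b c -> 0 < x < 1 -> 0 < y < 1 -> 0 <= t <= 1 ->
  Gf a b c (t * x + (1 - t) * y) - t * Gf a b c x - (1 - t) * Gf a b c y =
  Series (fun n => Bc a b c n * ((t * x + (1 - t) * y) ^ n - t * x ^ n - (1 - t) * y ^ n)).
Proof.
  intros H Hx Hy Ht. set (m := t * x + (1 - t) * y).
  assert (Hm : 0 < m < 1) by (unfold m; apply mid_in; auto).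
  assert (EB : forall z, 0 < z < 1 -> ex_series (fun n => Bc a b c n * z ^ n)).
  { intros z Hz. apply ex_ser. intros; apply B_bound; auto. rewrite Rabs_pos_eq; lra. }
  unfold Gf, PSeries.
  rewrite <- !Series_scal_l.
  rewrite <- Series_minus; [| apply EB; auto | apply (ex_scal t); apply EB; auto].
  rewrite <- Series_minus.
  - apply Series_ext. intros n. ring.
  - apply ex_minus. apply EB; auto. apply (ex_scal t); apply EB; auto.
  - apply (ex_scal (1 - t)); apply EB; auto.
Qed.

Lemma gap_terms a b c x y t n : hyps a b c -> 0 < x < 1 -> 0 < y < 1 -> 0 <= t <= 1 ->
  0 <= Bc a b c n * ((t * x + (1 - t) * y) ^ n - t * x ^ n - (1 - t) * y ^ n).
Proof.
  intros H Hx Hy Ht. destruct n as [|n].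
  - simpl. lra.
  - assert (Bc a b c (S n) <= 0) by (apply (B_nonpos a b c (S n)); auto; lia).
    pose proof (pow_convex x y t (S n) ltac:(lra) ltac:(lra) Ht). nra.
Qed.

Lemma gap_ex a b c x y t : hyps a b c -> 0 < x < 1 -> 0 < y < 1 -> 0 <= t <= 1 ->
  ex_series (fun n => Bc a b c n * ((t * x + (1 - t) * y) ^ n - t * x ^ n - (1 - t) * y ^ n)).
Proof.
  intros H Hx Hy Ht.
  assert (EB : forall z, 0 < z < 1 -> ex_series (fun n => Bc a b c n * z ^ n)).
  { intros z Hz. apply ex_ser. intros; apply B_bound; auto. rewrite Rabs_pos_eq; lra. }
  assert (E1 := EB (t * x + (1 - t) * y) (mid_in x y t Hx Hy Ht)).
  assert (E2 := ex_scal t _ (EB x Hx)).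
  assert (E3 := ex_scal (1 - t) _ (EB y Hy)).
  eapply ex_series_ext; [| exact (ex_minus _ _ (ex_minus _ _ E1 E2) E3)].
  intros n. simpl. ring.
Qed.

Theorem theorem1p4 (a b c : R) :
  0 < a -> 0 < b -> 0 < c ->
  a + b >= c -> c >= 2 * a * b -> c > a + b - 1 / 2 ->
  concave_on 0 1 (fun x => / hypF a b c x) /\
  (forall x y, 0 < x < 1 -> 0 < y < 1 ->
     hypF a b c ((x + y) / 2)
       <= 2 * hypF a b c x * hypF a b c y / (hypF a b c x + hypF a b c y) /\
     (hypF a b c ((x + y) / 2)
        = 2 * hypF a b c x * hypF a b c y / (hypF a b c x + hypF a b c y)
      <-> x = y)).
Proof.
  intros Ha Hb Hc H1 H2 H3.
  assert (H : hyps a b c) by (repeat split; auto).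
  split.
  - intros x y t Hx Hy Ht. cbv beta.
    rewrite !invF; auto; [|apply mid_in; auto].
    pose proof (G_gap a b c x y t H Hx Hy Ht).
    pose proof (Series_nonneg _ (fun n => gap_terms a b c x y t n H Hx Hy Ht) (gap_ex a b c x y t H Hx Hy Ht)).
    lra.
  - intros x y Hx Hy.
    assert (Em : (x + y) / 2 = 1 / 2 * x + (1 - 1 / 2) * y) by field.
    assert (Ht : 0 <= 1 / 2 <= 1) by lra.
    assert (Hm := mid_in x y (1 / 2) Hx Hy Ht). rewrite <- Em in Hm.
    pose proof (F_pos a b c x H Hx) as Fx. pose proof (F_pos a b c y H Hy) as Fy.
    pose proof (F_pos a b c _ H Hm) as Fm.
    pose proof (invF a b c x H Hx) as Ix. pose proof (invF a b c y H Hy) as Iy.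
    pose proof (invF a b c _ H Hm) as Im.
    pose proof (G_gap a b c x y (1 / 2) H Hx Hy Ht) as Gap. rewrite <- Em in Gap.
    set (d := fun n => Bc a b c n * (((x + y) / 2) ^ n - 1 / 2 * x ^ n - (1 - 1 / 2) * y ^ n)).
    fold d in Gap.
    assert (Sd : 0 <= Series d).
    { apply Series_nonneg. intros n; unfold d; rewrite Em; apply gap_terms; auto. unfold d; rewrite Em; apply gap_ex; auto. }
    set (F1 := hypF a b c x) in *. set (F2 := hypF a b c y) in *. set (F3 := hypF a b c ((x + y) / 2)) in *.
    set (R := 2 * F1 * F2 / (F1 + F2)).
    assert (HR : 0 < R) by (unfold R; apply Rdiv_lt_0_compat; nra).
    assert (Key : R - F3 = Series d * R * F3).
    { rewrite <- Gap, <- Ix, <- Iy, <- Im. unfold R. field. repeat split; lra. }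
    assert (0 <= Series d * R * F3) by (apply Rmult_le_pos; [apply Rmult_le_pos|]; lra).
    split. lra.
    split.
    + intros Eq. destruct (Req_dec x y) as [|Hne]; auto. exfalso.
      assert (d2 : 0 < d 2%nat).
      { unfold d. pose proof (B2_neg a b c H).
        assert (E : ((x + y) / 2) ^ 2 - 1 / 2 * x ^ 2 - (1 - 1 / 2) * y ^ 2
                    = - ((x - y) * (x - y)) / 4) by (simpl; field).
        rewrite E. assert (0 < (x - y) * (x - y)).
        { destruct (Rlt_or_le x y); nra. }
        nra. }
      assert (d 2%nat <= Series d).
      { apply Series_ge_2. intros n; unfold d; rewrite Em; apply gap_terms; auto. unfold d; rewrite Em; apply gap_ex; auto. }
      assert (0 < Series d * R * F3) by (apply Rmult_lt_0_compat; [apply Rmult_lt_0_compat|]; lra).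
      lra.
    + intros <-. unfold F3, R, F1, F2. replace ((x + x) / 2) with x by field. assert (0 < hypF a b c x) by exact Fx. field. lra.
Qed.
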